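(* Let $p(x,y)\in\mathbb{R}[x,y]$ be a real stable polynomial which is quadratic with respect to $x$. Suppose $(x_0,y_0)\in\mathbf{Ab}_p$ and $(x_0+\delta,y_0)\in\mathbf{Ab}_{q}$, where $q=(1-\frac12\partial_x^2)p$. Then: (i) if $\delta=1$, then $\Phi_q^y(x_0+\delta,y_0)\le\Phi_p^y(x_0,y_0)$; (ii) if $\delta\in(0,1)$ and $\Phi_p^x(x_0,y_0)\le\frac{\delta}{1-\delta^2}$, then $\Phi_q^y(x_0+\delta,y_0)\le\Phi_p^y(x_0,y_0)$.
   Context: A polynomial $p\in\mathbb{R}[z_1,\ldots,z_n]$ is real stable if $p(z_1,\ldots,z_n)\neq0$ whenever $\mathrm{Im}(z_i)>0$ for all $i$. A point $\mathbf{z}\in\mathbb{R}^n$ is above the roots of $p$ if $p(\mathbf{z}+\mathbf{t})>0$ for all $\mathbf{t}\in\mathbb{R}^n_{\ge0}$; $\mathbf{Ab}_p$ denotes the set of such points. For a real stable $p$ and $\mathbf{z}\in\mathbf{Ab}_p$, the barrier function of $p$ in direction $i$ is $\Phi_p^i(\mathbf{z})=\partial_{z_i}p(\mathbf{z})/p(\mathbf{z})$; for bivariate $p(x,y)$ the directions are written $x$ and $y$. *)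

(* Defs.v *)
From mathcomp Require Import all_boot all_algebra.
From mathcomp Require Import complex reals.
Import GRing.Theory Num.Theory.
Local Open Scope ring_scope.

(* A bivariate polynomial p(x,y) is represented as p : {poly {poly R}}:
   the OUTER variable is x, the coefficients are polynomials in y. *)

Definition eval2 {K : comNzRingType} (p : {poly {poly K}}) (a b : K) : K :=
  (p.[a%:P]).[b].

Definition dx {K : comNzRingType} (p : {poly {poly K}}) : {poly {poly K}} :=
  p^`().
Definition dy {K : comNzRingType} (p : {poly {poly K}}) : {poly {poly K}} :=
  map_poly (fun c : {poly K} => c^`()) p.

Definition complexify {R : realType} (p : {poly {poly R}}) : {poly {poly R[i]}} :=
  map_poly (map_poly (fun c : R => (c%:C)%C)) p.

Definition real_stable {R : realType} (p : {poly {poly R}}) : Prop :=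
  forall z1 z2 : R[i], 0 < complex.Im z1 -> 0 < complex.Im z2 ->
    eval2 (complexify p) z1 z2 != 0.

Definition quadratic_in_x {R : realType} (p : {poly {poly R}}) : Prop :=
  size p = 3%N.

Definition above_roots {R : realType} (p : {poly {poly R}}) (a b : R) : Prop :=
  forall t1 t2 : R, 0 <= t1 -> 0 <= t2 -> 0 < eval2 p (a + t1) (b + t2).

Definition barrier_x {R : realType} (p : {poly {poly R}}) (a b : R) : R :=
  eval2 (dx p) a b / eval2 p a b.
Definition barrier_y {R : realType} (p : {poly {poly R}}) (a b : R) : R :=
  eval2 (dy p) a b / eval2 p a b.

Definition op_q {R : realType} (p : {poly {poly R}}) : {poly {poly R}} :=
  p - ((2 : R)^-1)%:P%:P * dx (dx p).

(* Main.v *)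
Require Import Defs.
From mathcomp Require Import all_boot all_order all_algebra.
From mathcomp Require Import complex reals.
From mathcomp Require Import ring lra.
Import Order.TTheory GRing.Theory Num.Theory.
Local Open Scope ring_scope.

Section SA.
Variable R : realType.
Local Open Scope complex_scope.

Lemma ImMJ (w v : R[i]) : complex.Im (w * v^*) = complex.Im w * complex.Re v - complex.Re w * complex.Im v.
Proof. case: w => a b; case: v => c d /=. ring. Qed.

Lemma prod_step (r : seq R[i]) (x : R) :
  (forall z, z \in r -> complex.Im z <= 0) ->
  complex.Im ((\prod_(z <- r) ('X - z%:P))^`().[x%:C] * ((\prod_(z <- r) ('X - z%:P)).[x%:C])^*) <= 0.
Proof.
elim: r => [|z r IH] Hr.
  by rewrite big_nil derivC horner0 mul0r.
rewrite big_cons derivM derivXsubC mul1r !hornerE.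
set h := (\prod_(j <- r) _).[_].
set k := (_^`()).[_].
have := IH (fun w wr => Hr w (mem_behead (s:=z::r) wr)).
rewrite -/h -/k.
have Hz : complex.Im z <= 0 by apply: Hr; rewrite mem_head.
move: Hz; rewrite !ImMJ; clear Hr IH.
case: z h k => [z1 z2] [h1 h2] [k1 k2] /= Hz IHk.
have -> : (h2 + ((x - z1) * k2 + (0 - z2) * k1)) * ((x - z1) * h1 - (0 - z2) * h2) -
  (h1 + ((x - z1) * k1 - (0 - z2) * k2)) * ((x - z1) * h2 + (0 - z2) * h1) = (h1^+2+h2^+2) * z2 + ((x-z1)^+2+z2^+2) * (k2 * h1 - k1 * h2).
  by ring.
have A : 0 <= h1^+2+h2^+2 by rewrite addr_ge0 // sqr_ge0.
have B : 0 <= (x-z1)^+2+z2^+2 by rewrite addr_ge0 // sqr_ge0.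
rewrite -[0 in X in _ <= X]addr0; apply: lerD.
  by rewrite mulr_ge0_le0.
by rewrite mulr_ge0_le0.
Qed.

Lemma uhp_wronsk (F : {poly R[i]}) (x : R) :
  (forall z : R[i], 0 < complex.Im z -> F.[z] != 0) ->
  complex.Im (F^`().[x%:C] * (F.[x%:C])^*) <= 0.
Proof.
move=> HF.
have [r Hr] := closed_field_poly_normal F.
have Fn0 : F != 0.
  apply/negP=> /eqP F0; have := HF 'i%C; rewrite F0 horner0 eqxx /=.
  by move/(_ ltr01).
have Hroots : forall z, z \in r -> complex.Im z <= 0.
  move=> z zr; rewrite leNgt; apply/negP=> Hz.
  have := HF z Hz; rewrite Hr hornerZ.
  have -> : (\prod_(z0 <- r) ('X - z0%:P)).[z] = 0.
    by apply/eqP; rewrite -/(root _ z) root_prod_XsubC.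
  by rewrite mulr0 eqxx.
have := @prod_step r x Hroots.
rewrite Hr derivZ !hornerZ rmorphM /=.
set g := (\prod_(_ <- _) _).[_]. set k := (_^`()).[_].
rewrite !ImMJ.
case: (lead_coef F) g k => [c1 c2] [g1 g2] [k1 k2] /= H.
have -> : (c1 * k1 - c2 * k2) * (c1 * - g2 + - c2 * g1) + (c1 * k2 + c2 * k1) * (c1 * g1 - - c2 * - g2) = (c1^+2 + c2^+2) * (k2 * g1 - k1 * g2) by ring.
by rewrite mulr_ge0_le0 // addr_ge0 // sqr_ge0.
Qed.
End SA.
Section SB.
Variable R : realType.

Lemma disc_le {al be ga : R} :
  (forall u, al * u ^+ 2 + 2 * be * u + ga <= 0) -> be ^+ 2 <= al * ga.
Proof.
move=> HW.
have key : forall u, al * (al * u ^+ 2 + 2 * be * u + ga) = (al * u + be) ^+ 2 + (al * ga - be ^+ 2).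
  by move=> u; ring.
have [al0|al0|al0] := ltgtP al 0.
- have := HW (- be / al).
  move=> H.
  have := key (- be / al).
  have -> : al * (- be / al) + be = 0 by field; rewrite lt_eqF.
  move=> E.
  have : 0 <= al * (al * (- be / al) ^+ 2 + 2 * be * (- be / al) + ga).
    by rewrite mulr_le0 // ltW.
  rewrite E expr0n /= add0r; lra.
- exfalso.
  set K := `|be ^+ 2 - al * ga| + 1.
  have := key ((K - be) / al).
  have -> : al * ((K - be) / al) + be = K by field; rewrite gt_eqF.
  have H1 : al * (al * ((K - be) / al) ^+ 2 + 2 * be * ((K - be) / al) + ga) <= 0.
    by rewrite mulr_ge0_le0 // ltW.
  have HK1 : 1 <= K by rewrite /K lerDr.
  have HK2 : K <= K ^+ 2 by rewrite expr2 ler_peMl // (le_trans ler01).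
  have HK3 : be ^+ 2 - al * ga < K by rewrite /K (le_lt_trans (ler_norm _)) // ltrDl.
  lra.
- subst al.
  have Hb : be = 0.
    apply/eqP; apply: contraT => bn0.
    have := HW ((1 - ga) / (2 * be)).
    have -> : 0 * ((1 - ga) / (2 * be)) ^+ 2 + 2 * be * ((1 - ga) / (2 * be)) + ga = 1.
      by field.
    by rewrite ler10.
  by rewrite Hb expr0n /= mul0r.
Qed.


Lemma final_real (a b c a1 b1 c1 x0 d : R) :
  (forall x, (c + b*x + a*x^+2) * (b1 + 2*a1*x) - (b + 2*a*x) * (c1 + b1*x + a1*x^+2) <= 0) ->
  0 <= a -> 0 < c + b*x0 + a*x0^+2 ->
  0 < c + b*(x0+d) + a*(x0+d)^+2 - a ->
  (d = 1 -> (c1 + b1*(x0+d) + a1*(x0+d)^+2 - a1) / (c + b*(x0+d) + a*(x0+d)^+2 - a)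
             <= (c1 + b1*x0 + a1*x0^+2) / (c + b*x0 + a*x0^+2)) /\
  (0 < d < 1 -> (b + 2*a*x0) / (c + b*x0 + a*x0^+2) <= d / (1 - d^+2) ->
     (c1 + b1*(x0+d) + a1*(x0+d)^+2 - a1) / (c + b*(x0+d) + a*(x0+d)^+2 - a)
             <= (c1 + b1*x0 + a1*x0^+2) / (c + b*x0 + a*x0^+2)).
Proof.
move=> Hw Ha HP HQ.
set P := c + b*x0 + a*x0^+2 in HP *.
set Q := c + b*(x0+d) + a*(x0+d)^+2 - a in HQ *.
set Qy := c1 + b1*(x0+d) + a1*(x0+d)^+2 - a1.
set Py := c1 + b1*x0 + a1*x0^+2.
set Px := b + 2*a*x0.
set Pxy := b1 + 2*a1*x0.
set al := Px * a1 - a * Pxy.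
set be := P * a1 - Py * a.
set ga := P * Pxy - Px * Py.
have HW : forall u, al * u ^+ 2 + 2 * be * u + ga <= 0.
  move=> u; have := Hw (x0 + u).
  suff -> : (c + b * (x0 + u) + a * (x0 + u) ^+ 2) * (b1 + 2 * a1 * (x0 + u)) -
    (b + 2 * a * (x0 + u)) * (c1 + b1 * (x0 + u) + a1 * (x0 + u) ^+ 2) = al * u ^+ 2 + 2 * be * u + ga by [].
  rewrite /al /be /ga /P /Px /Py /Pxy; ring.
have Hdisc := disc_le HW.
have Hga : ga <= 0 by have := HW 0; rewrite expr0n /= !mulr0 !add0r.
have Hrel : a * ga + P * al = Px * be by rewrite /al /be /ga /P /Px /Py /Pxy; ring.
have Hkey : Qy * P - Py * Q = d * ga - (1 - d^+2) * be.
  by rewrite /ga /be /Px /Pxy /Qy /Q /P /Py; ring.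
have Hred : (Qy / Q <= Py / P) = (d * ga - (1 - d^+2) * be <= 0).
  by rewrite ler_pdivrMr // mulrAC ler_pdivlMr // -subr_le0 Hkey.
rewrite Hred; split.
  move=> ->; rewrite expr1n subrr mul0r subr0 mul1r //.
move=> /andP [d0 d1] Hx.
have Hd2 : 0 < 1 - d^+2 by rewrite subr_gt0 expr2; nra.
have Hx' : Px * (1 - d^+2) <= d * P.
  by move: Hx; rewrite ler_pdivrMr // mulrAC ler_pdivlMr // mulrC.
have [bpos|bneg] := leP 0 be.
  have : d * ga <= 0 by rewrite mulr_ge0_le0 // ltW.
  have : 0 <= (1 - d^+2) * be by rewrite mulr_ge0 // ltW.
  lra.
have H1 : P * (- al) <= Px * (- be) by nra.
have H2 : (1 - d^+2) * (- al) <= d * (- be) by nra.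
have H3 : (1 - d^+2) * be^+2 <= d * (- be) * (- ga) by nra.
nra.
Qed.
End SB.
Lemma h3 (K : comNzRingType) (P : {poly K}) (z : K) :
  (forall j, (3 <= j)%N -> P`_j = 0) -> P.[z] = P`_0 + P`_1 * z + P`_2 * z ^+ 2.
Proof.
move=> HP; rewrite (@horner_coef_wide _ 3); last by apply/leq_sizeP.
by rewrite !big_ord_recr big_ord0 /= add0r expr0 mulr1 expr1.
Qed.

Lemma ev3 (K : comNzRingType) (P : {poly {poly K}}) (z y : K) :
  (forall j, (3 <= j)%N -> P`_j = 0) ->
  eval2 P z y = (P`_0).[y] + (P`_1).[y] * z + (P`_2).[y] * z ^+ 2.
Proof.
move=> HP; rewrite /eval2 (@h3 _ P z%:P HP).
by rewrite !hornerE.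
Qed.

Section SC.
Variable R : realType.
Variable p : {poly {poly R}}.
Hypothesis Hs : size p = 3%N.

Lemma pz j : (3 <= j)%N -> p`_j = 0.
Proof. by move=> Hj; rewrite nth_default // Hs. Qed.

Lemma E_p x y : eval2 p x y = (p`_0).[y] + (p`_1).[y] * x + (p`_2).[y] * x ^+ 2.
Proof. exact: ev3 pz. Qed.

Lemma E_px x y : eval2 (dx p) x y = (p`_1).[y] + 2 * (p`_2).[y] * x.
Proof.
rewrite ev3 /dx.
  by rewrite !coef_deriv (@pz 3 (leqnn 3)) mul0rn horner0 mul0r addr0 !hornerE; ring.
by move=> j Hj; rewrite coef_deriv pz ?mul0rn // (leq_trans Hj).
Qed.

Lemma dy_coef (P : {poly {poly R}}) j : (dy P)`_j = (P`_j)^`().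
Proof. by rewrite /dy coef_map_id0 // deriv0. Qed.

Lemma E_py x y : eval2 (dy p) x y = (p`_0)^`().[y] + (p`_1)^`().[y] * x + (p`_2)^`().[y] * x ^+ 2.
Proof.
rewrite ev3 ?dy_coef //.
by move=> j Hj; rewrite dy_coef pz // deriv0.
Qed.

Lemma opq_coef j : (op_q p)`_j = p`_j - (2^-1)%:P * (p`_j.+2 *+ j.+2 *+ j.+1).
Proof. by rewrite /op_q /dx coefB coefCM !coef_deriv. Qed.

Lemma opq_z j : (3 <= j)%N -> (op_q p)`_j = 0.
Proof. by move=> Hj; rewrite opq_coef !pz ?mul0rn ?mulr0 ?subr0 // ltnW // ltnW. Qed.

Lemma E_q x y : eval2 (op_q p) x y = (p`_0).[y] + (p`_1).[y] * x + (p`_2).[y] * x ^+ 2 - (p`_2).[y].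
Proof.
rewrite ev3; last exact: opq_z.
rewrite !opq_coef !(@pz 3 (leqnn 3)) (@pz 4 isT) !mul0rn mulr0 !subr0.
rewrite !hornerE; by field.
Qed.

Lemma E_qy x y : eval2 (dy (op_q p)) x y = (p`_0)^`().[y] + (p`_1)^`().[y] * x + (p`_2)^`().[y] * x ^+ 2 - (p`_2)^`().[y].
Proof.
rewrite ev3; last by move=> j Hj; rewrite dy_coef opq_z // deriv0.
rewrite !dy_coef !opq_coef !(@pz 3 (leqnn 3)) (@pz 4 isT) !mul0rn mulr0 !subr0.
rewrite derivB derivM derivC mul0r add0r !derivMn !hornerE; by field.
Qed.


Local Notation rc := (real_complex R).

Lemma cplx_coef j : (complexify p)`_j = map_poly rc (p`_j).
Proof. by rewrite /complexify coef_map_id0 // map_poly0. Qed.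

Lemma cplx_z j : (3 <= j)%N -> (complexify p)`_j = 0.
Proof. by move=> Hj; rewrite cplx_coef pz // map_poly0. Qed.

Lemma E_F (z : R[i]) (w : R) :
  ((complexify p).[z%:P]).[rc w] = rc (p`_0).[w] + rc (p`_1).[w] * z + rc (p`_2).[w] * z ^+ 2.
Proof. rewrite -/(eval2 _ _ _) ev3; last exact: cplx_z. by rewrite !cplx_coef !horner_map. Qed.

Lemma E_F' (z : R[i]) (w : R) :
  ((complexify p).[z%:P])^`().[rc w] = rc (p`_0)^`().[w] + rc (p`_1)^`().[w] * z + rc (p`_2)^`().[w] * z ^+ 2.
Proof.
rewrite (@h3 _ _ z%:P); last exact: cplx_z.
rewrite expr2 !derivD !derivM !derivC !mulr0 !addr0 mul0r mulr0 addr0. rewrite !cplx_coef !deriv_map !hornerE !horner_map; ring.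
Qed.

End SC.
Section T.
Variable R : realType.
Local Notation rc := (real_complex R).
Local Open Scope complex_scope.

Lemma Im_ident (a b c a1 b1 c1 x e : R) :
  complex.Im ((rc c1 + rc b1 * (x +i* e) + rc a1 * (x +i* e) ^+ 2) *
              (rc c + rc b * (x +i* e) + rc a * (x +i* e) ^+ 2)^*)
  = e * ((c + b*x + a*x^+2) * (b1 + 2*a1*x) - (b + 2*a*x) * (c1 + b1*x + a1*x^+2))
    + e ^+ 3 * (a1 * (b + 2*a*x) - a * (b1 + 2*a1*x)).
Proof. rewrite ImMJ /= !expr2 /=. ring. Qed.

Lemma lim_le (W Z : R) : (forall e, 0 < e -> e * W + e ^+ 3 * Z <= 0) -> W <= 0.
Proof.
move=> H; rewrite leNgt; apply/negP => W0.
set e := W / (W + `|Z|).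
have D0 : 0 < W + `|Z| by rewrite ltr_wpDr.
have e0 : 0 < e by rewrite divr_gt0.
have e1 : e <= 1 by rewrite ler_pdivrMr // mul1r lerDl.
have eE : e * (W + `|Z|) = W by rewrite /e divfK // gt_eqF.
have Zn : - `|Z| <= Z by rewrite lerNl ler_normr lexx orbT.
have := H e e0.
have : e * `|Z| < W.
  have : e * `|Z| <= e * (W + `|Z|) - e * W by rewrite mulrDr addrAC subrr add0r.
  rewrite eE => h1; have : 0 < e * W by rewrite mulr_gt0.
  lra.
move=> h2 h3.
have h4 : e ^+ 3 * Z >= - (e ^+ 3 * `|Z|) by rewrite -mulrN ler_wpM2l // exprn_ge0 // ltW.
have h5 : e ^+ 3 * `|Z| <= e * `|Z|.
  apply: ler_wpM2r => //.
  have ee : e * e <= 1 by nra.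
  rewrite !exprS expr0 mulr1; nra.
nra.
Qed.

End T.

Lemma a_nonneg (R : realType) (a B C : R) :
  (forall t, 0 <= t -> 0 < C + B*t + a*t^+2) -> 0 <= a.
Proof.
move=> H; rewrite leNgt; apply/negP => a0.
have na : 0 < - a by rewrite oppr_gt0.
set t := (`|B| + `|C|) / (- a) + 1.
have t1 : 1 <= t by rewrite /t lerDr divr_ge0 // ?addr_ge0 // ltW.
have ta : a * t = - (`|B| + `|C|) + a.
  rewrite /t mulrDr mulr1; congr (_ + _); field; rewrite lt_eqF //.
have hB : B * t <= `|B| * t by rewrite ler_wpM2r ?ler_norm // (le_trans ler01).
have hC : C <= `|C| by rewrite ler_norm.
have hCt : `|C| <= `|C| * t by rewrite ler_peMr.
have hat : a * t < 0 by rewrite pmulr_llt0 // (lt_le_trans ltr01 t1).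
have := H t (le_trans ler01 t1).
rewrite expr2 mulrA ta !mulrDl mulNr mulrDl.
lra.
Qed.

Theorem lemma3p11 (R : realType) (p : {poly {poly R}}) (x0 y0 delta : R) :
  real_stable p -> quadratic_in_x p ->
  above_roots p x0 y0 -> above_roots (op_q p) (x0 + delta) y0 ->
  (delta = 1 -> barrier_y (op_q p) (x0 + delta) y0 <= barrier_y p x0 y0) /\
  (0 < delta < 1 -> barrier_x p x0 y0 <= delta / (1 - delta ^+ 2) ->
     barrier_y (op_q p) (x0 + delta) y0 <= barrier_y p x0 y0).
Proof.
move=> Hst Hs Hab Habq.
rewrite /barrier_y /barrier_x.
rewrite (@E_qy R p Hs) (@E_q R p Hs) (@E_py R p Hs) (@E_p R p Hs) (@E_px R p Hs).
apply: final_real.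
- move=> x; apply: lim_le => e e0.
  have := @uhp_wronsk R ((complexify p).[(x +i* e)%C%:P]) y0.
  rewrite (@E_F R p Hs) (@E_F' R p Hs) Im_ident; apply.
  move=> w Hw; exact: Hst.
- apply: (@a_nonneg R _ ((p`_1).[y0] + 2 * (p`_2).[y0] * x0)
          ((p`_0).[y0] + (p`_1).[y0] * x0 + (p`_2).[y0] * x0 ^+ 2)) => t t0.
  have := Hab t 0 t0 (lexx 0).
  rewrite addr0 (@E_p R p Hs).
  suff -> : (p`_0).[y0] + (p`_1).[y0] * (x0 + t) + (p`_2).[y0] * (x0 + t) ^+ 2 =
    (p`_0).[y0] + (p`_1).[y0] * x0 + (p`_2).[y0] * x0 ^+ 2 +
    ((p`_1).[y0] + 2 * (p`_2).[y0] * x0) * t + (p`_2).[y0] * t ^+ 2 by [].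
  ring.
- have := Hab 0 0 (lexx 0) (lexx 0).
  by rewrite !addr0 (@E_p R p Hs).
- have := Habq 0 0 (lexx 0) (lexx 0).
  by rewrite !addr0 (@E_q R p Hs).
Qed.
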